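(* Let $A$ be a double Poisson algebra and $(M,\{\!\{-,-\}\!\}_M)$ a double Poisson $A$-bimodule, and set $\{-,-\}_M=\mu_M\circ\{\!\{-,-\}\!\}_M:A\times M\to M$. Then $\{-,-\}_M$ induces well-defined maps $A_\natural\times M\to M$ and $A_\natural\times M_\natural\to M_\natural$, where $A_\natural=A/[A,A]$ and $M_\natural=M/[A,M]$.
   Context: $A$ is a unital associative $k$-algebra. A double bracket on $A$ is a bilinear map $\{\!\{-,-\}\!\}:A\times A\to A\otimes A$ with $\{\!\{a,b\}\!\}=-\{\!\{b,a\}\!\}^\circ$ (where $(u\otimes v)^\circ=v\otimes u$) and $\{\!\{a,bc\}\!\}=b\{\!\{a,c\}\!\}+\{\!\{a,b\}\!\}c$ for the outer bimodule structure $b(a_1\otimes a_2)c=ba_1\otimes a_2c$. The inner structure is $b*(a_1\otimes a_2)*c=a_1c\otimes ba_2$. Writing $\{\!\{a,b_1\otimes\cdots\otimes b_n\}\!\}_L=\{\!\{a,b_1\}\!\}\otimes b_2\otimes\cdots\otimes b_n$ and $\sigma_s$ for the permutation of tensor factors $b_1\otimes\cdots\otimes b_n\mapsto b_{s^{-1}(1)}\otimes\cdots\otimes b_{s^{-1}(n)}$, $A$ is a double Poisson algebra if $\{\!\{a,\{\!\{b,c\}\!\}\}\!\}_L+\sigma_{(123)}\{\!\{b,\{\!\{c,a\}\!\}\}\!\}_L+\sigma_{(132)}\{\!\{c,\{\!\{a,b\}\!\}\}\!\}_L=0$. For an $A$-bimodule $M$, a double Poisson bracket on $M$ is a bilinear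 $\{\!\{-,-\}\!\}_M:A\times M\to(A\otimes M)\oplus(M\otimes A)$ with (i) $\{\!\{a,bm\}\!\}_M=\{\!\{a,b\}\!\}m+b\{\!\{a,m\}\!\}_M$ and $\{\!\{a,mb\}\!\}_M=\{\!\{a,m\}\!\}_Mb+m\{\!\{a,b\}\!\}$, and (ii) $\{\!\{ab,m\}\!\}_M=a*\{\!\{b,m\}\!\}_M+\{\!\{a,m\}\!\}_M*b$ (inner actions). Put $\{\!\{m,b\}\!\}_M=-(\{\!\{b,m\}\!\}_M)^\circ$; if $\{\!\{b,m\}\!\}_M=(b_1\otimes m_1)\oplus(m_2\otimes b_2)$ set $\{\!\{a,\{\!\{b,m\}\!\}_M\}\!\}_L=(\{\!\{a,b_1\}\!\}\otimes m_1)\oplus(\{\!\{a,m_2\}\!\}_M\otimes b_2)$, and $\{\!\{m,\{\!\{a,b\}\!\}\}\!\}_L=\{\!\{m,\{\!\{a,b\}\!\}'\}\!\}_M\otimes\{\!\{a,b\}\!\}''$. $M$ is a double Poisson $A$-bimodule if moreover (iii) $\{\!\{a,\{\!\{b,m\}\!\}_M\}\!\}_L+\sigma_{(123)}\{\!\{b,\{\!\{m,a\}\!\}_M\}\!\}_L+\sigma_{(132)}\{\!\{m,\{\!\{a,b\}\!\}\}\!\}_L=0$. $\mu_M:(A\otimes M)\oplus(M\otimes A)\to M$ is the bimodule action map. *)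

(* Defs.v *)
(* Double Poisson algebras and double Poisson bimodules,
   with tensor products over k modelled by finite formal sums of pure
   tensors, two formal sums being equal in U (x)_k V iff every k-bilinear
   map out of U x V (into any k-module) takes the same value on them
   (universal property of the tensor product). *)
From HB Require Import structures.
From mathcomp Require Import all_boot all_algebra.
Set Implicit Arguments. Unset Strict Implicit. Unset Printing Implicit Defensive.
Import GRing.Theory.
Local Open Scope ring_scope.

Section Tensors.
Variable k : fieldType.

Definition bilinear_map (U V W : lmodType k) (f : U -> V -> W) : Prop :=
  (forall v c u u', f (c *: u + u') v = c *: f u v + f u' v) /\
  (forall u c v v', f u (c *: v + v') = c *: f u v + f u v').

Definition trilinear_map (U V X W : lmodType k) (f : U -> V -> X -> W) : Prop :=
  [/\ (forall v x c u u', f (c *: u + u') v x = c *: f u v x + f u' v x),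
      (forall u x c v v', f u (c *: v + v') x = c *: f u v x + f u v' x) &
      (forall u v c x x', f u v (c *: x + x') = c *: f u v x + f u v x')].

Definition tens2 (U V : Type) := seq (U * V).
Definition tens3 (U V X : Type) := seq (U * V * X).

Definition teq2 (U V : lmodType k) (s t : tens2 U V) : Prop :=
  forall (W : lmodType k) (f : U -> V -> W), bilinear_map f ->
    \sum_(p <- s) f p.1 p.2 = \sum_(p <- t) f p.1 p.2.

Definition teq3 (U V X : lmodType k) (s t : tens3 U V X) : Prop :=
  forall (W : lmodType k) (f : U -> V -> X -> W), trilinear_map f ->
    \sum_(p <- s) f p.1.1 p.1.2 p.2 = \sum_(p <- t) f p.1.1 p.1.2 p.2.

Definition tscale (U : lmodType k) (V : Type) (c : k) (s : tens2 U V) : tens2 U V :=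
  map (fun p => (c *: p.1, p.2)) s.
Definition topp (U : lmodType k) (V : Type) (s : tens2 U V) : tens2 U V :=
  map (fun p => (- p.1, p.2)) s.
Definition tflip (U V : Type) (s : tens2 U V) : tens2 V U :=
  map (fun p => (p.2, p.1)) s.

Definition s123 (X Y Z : Type) (p : X * Y * Z) : Z * X * Y := (p.2, p.1.1, p.1.2).
Definition s132 (X Y Z : Type) (p : X * Y * Z) : Y * Z * X := (p.1.2, p.2, p.1.1).

End Tensors.

Section DoublePoissonAlgebra.
Variables (k : fieldType) (A : algType k).

Definition touterL (b : A) (s : tens2 A A) : tens2 A A := map (fun p => (b * p.1, p.2)) s.
Definition touterR (s : tens2 A A) (c : A) : tens2 A A := map (fun p => (p.1, p.2 * c)) s.

Definition double_bracket (dbr : A -> A -> tens2 A A) : Prop :=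
  [/\ (forall c a a' b, teq2 (dbr (c *: a + a') b) (tscale c (dbr a b) ++ dbr a' b)),
      (forall c a b b', teq2 (dbr a (c *: b + b')) (tscale c (dbr a b) ++ dbr a b')),
      (forall a b, teq2 (dbr a b) (topp (tflip (dbr b a)))) &
      (forall a b c, teq2 (dbr a (b * c)) (touterL b (dbr a c) ++ touterR (dbr a b) c))].

Definition dbrL (dbr : A -> A -> tens2 A A) (a : A) (t : tens2 A A) : tens3 A A A :=
  flatten [seq [seq (q.1, q.2, p.2) | q <- dbr a p.1] | p <- t].

Definition double_poisson_algebra (dbr : A -> A -> tens2 A A) : Prop :=
  double_bracket dbr /\
  forall a b c,
    teq3 (dbrL dbr a (dbr b c) ++ map (@s123 _ _ _) (dbrL dbr b (dbr c a))
            ++ map (@s132 _ _ _) (dbrL dbr c (dbr a b))) [::].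

End DoublePoissonAlgebra.

Section Bimodules.
Variables (k : fieldType) (A : algType k) (M : lmodType k).
Variables (la : A -> M -> M) (ra : M -> A -> M).

Definition is_bimodule : Prop :=
  [/\ bilinear_map la, bilinear_map (fun (a : A) (m : M) => ra m a),
      (forall m, la 1 m = m) /\ (forall m, ra m 1 = m),
      (forall a b m, la (a * b) m = la a (la b m)) /\
      (forall a b m, ra m (a * b) = ra (ra m a) b) &
      (forall a b m, la a (ra m b) = ra (la a m) b)].

Definition dsum := (tens2 A M * tens2 M A)%type.
Definition dsum_eq (x y : dsum) : Prop := teq2 x.1 y.1 /\ teq2 x.2 y.2.
Definition dsadd (x y : dsum) : dsum := (x.1 ++ y.1, x.2 ++ y.2).
Definition dsscale (c : k) (x : dsum) : dsum := (tscale c x.1, tscale c x.2).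

Definition dsoutL (b : A) (x : dsum) : dsum :=
  (map (fun p => (b * p.1, p.2)) x.1, map (fun p => (la b p.1, p.2)) x.2).
Definition dsoutR (x : dsum) (b : A) : dsum :=
  (map (fun p => (p.1, ra p.2 b)) x.1, map (fun p => (p.1, p.2 * b)) x.2).
(* inner actions: b * (u (x) v) * c = u c (x) b v *)
Definition dsinL (b : A) (x : dsum) : dsum :=
  (map (fun p => (p.1, la b p.2)) x.1, map (fun p => (p.1, b * p.2)) x.2).
Definition dsinR (x : dsum) (c : A) : dsum :=
  (map (fun p => (p.1 * c, p.2)) x.1, map (fun p => (ra p.1 c, p.2)) x.2).
Definition tactR (t : tens2 A A) (m : M) : tens2 A M := map (fun p => (p.1, la p.2 m)) t.
Definition tactL (m : M) (t : tens2 A A) : tens2 M A := map (fun p => (ra m p.1, p.2)) t.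

Record tri := Tri { tAAM : tens3 A A M; tAMA : tens3 A M A; tMAA : tens3 M A A }.
Definition tri_eq (x y : tri) : Prop :=
  [/\ teq3 (tAAM x) (tAAM y), teq3 (tAMA x) (tAMA y) & teq3 (tMAA x) (tMAA y)].
Definition tri_add (x y : tri) : tri :=
  Tri (tAAM x ++ tAAM y) (tAMA x ++ tAMA y) (tMAA x ++ tMAA y).
Definition tri0 : tri := Tri [::] [::] [::].
Definition sig123 (x : tri) : tri :=
  Tri (map (@s123 _ _ _) (tAMA x)) (map (@s123 _ _ _) (tMAA x)) (map (@s123 _ _ _) (tAAM x)).
Definition sig132 (x : tri) : tri :=
  Tri (map (@s132 _ _ _) (tMAA x)) (map (@s132 _ _ _) (tAAM x)) (map (@s132 _ _ _) (tAMA x)).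

Variables (dbr : A -> A -> tens2 A A) (dbrM : A -> M -> dsum).

(* {{m, b}}_M = - ({{b, m}}_M)^o *)
Definition dbrMrev (m : M) (b : A) : dsum :=
  (topp (tflip (dbrM b m).2), topp (tflip (dbrM b m).1)).

(* {{a, (b1 (x) m1) (+) (m2 (x) b2)}}_L = ({{a,b1}} (x) m1) (+) ({{a,m2}}_M (x) b2) *)
Definition dbrL_ds (a : A) (x : dsum) : tri :=
  Tri (flatten [seq [seq (q.1, q.2, p.2) | q <- dbr a p.1] | p <- x.1])
      (flatten [seq [seq (q.1, q.2, p.2) | q <- (dbrM a p.1).1] | p <- x.2])
      (flatten [seq [seq (q.1, q.2, p.2) | q <- (dbrM a p.1).2] | p <- x.2]).

Definition dbrL_M (m : M) (t : tens2 A A) : tri :=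
  Tri [::]
      (flatten [seq [seq (q.1, q.2, p.2) | q <- (dbrMrev m p.1).1] | p <- t])
      (flatten [seq [seq (q.1, q.2, p.2) | q <- (dbrMrev m p.1).2] | p <- t]).

Definition double_poisson_bimodule : Prop :=
  [/\ (forall c a a' m, dsum_eq (dbrM (c *: a + a') m) (dsadd (dsscale c (dbrM a m)) (dbrM a' m))),
      (forall c a m m', dsum_eq (dbrM a (c *: m + m')) (dsadd (dsscale c (dbrM a m)) (dbrM a m'))),
      (forall a b m, dsum_eq (dbrM a (la b m)) (dsadd (tactR (dbr a b) m, [::]) (dsoutL b (dbrM a m))))
      /\ (forall a b m, dsum_eq (dbrM a (ra m b)) (dsadd (dsoutR (dbrM a m) b) ([::], tactL m (dbr a b)))),
      (forall a b m, dsum_eq (dbrM (a * b) m) (dsadd (dsinL a (dbrM b m)) (dsinR (dbrM a m) b))) &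
      (forall a b m, tri_eq (tri_add (dbrL_ds a (dbrM b m))
                              (tri_add (sig123 (dbrL_ds b (dbrMrev m a)))
                                       (sig132 (dbrL_M m (dbr a b))))) tri0)].

Definition brM (a : A) (m : M) : M :=
  \sum_(p <- (dbrM a m).1) la p.1 p.2 + \sum_(p <- (dbrM a m).2) ra p.1 p.2.

End Bimodules.

Inductive in_span (k : fieldType) (V : lmodType k) (P : V -> Prop) : V -> Prop :=
  | span0 : in_span P 0
  | spanS (c : k) (x v : V) : P x -> in_span P v -> in_span P (c *: x + v).

Definition commAA (k : fieldType) (A : algType k) : A -> Prop :=
  in_span (fun x : A => exists a b : A, x = a * b - b * a).
Definition commAM (k : fieldType) (A : algType k) (M : lmodType k)
  (la : A -> M -> M) (ra : M -> A -> M) : M -> Prop :=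
  in_span (fun x : M => exists (a : A) (m : M), x = la a m - ra m a).

(* Main.v *)
Require Import Defs.
From HB Require Import structures.
From mathcomp Require Import all_boot all_algebra.
Import GRing.Theory.
Local Open Scope ring_scope.

Section Helpers.
Local Set Implicit Arguments.
Variable k : fieldType.

Lemma bil_addl (U V W : lmodType k) (f : U -> V -> W) : bilinear_map f ->
  forall u u' v, f (u + u') v = f u v + f u' v.
Proof. by move=> H u u' v; have := H.1 v 1 u u'; rewrite !scale1r. Qed.
Lemma bil_addr (U V W : lmodType k) (f : U -> V -> W) : bilinear_map f ->
  forall u v v', f u (v + v') = f u v + f u v'.
Proof. by move=> H u v v'; have := H.2 u 1 v v'; rewrite !scale1r. Qed.
Lemma bil0l (U V W : lmodType k) (f : U -> V -> W) : bilinear_map f ->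
  forall v, f 0 v = 0.
Proof.
move=> H v; have := bil_addl H 0 0 v; rewrite addr0 => e.
by apply: (@addrI _ (f 0 v)); rewrite addr0 -e.
Qed.
Lemma bil0r (U V W : lmodType k) (f : U -> V -> W) : bilinear_map f ->
  forall u, f u 0 = 0.
Proof.
move=> H u; have := bil_addr H u 0 0; rewrite addr0 => e.
by apply: (@addrI _ (f u 0)); rewrite addr0 -e.
Qed.
Lemma bil_scalel (U V W : lmodType k) (f : U -> V -> W) : bilinear_map f ->
  forall c u v, f (c *: u) v = c *: f u v.
Proof. by move=> H c u v; have := H.1 v c u 0; rewrite addr0 (bil0l H) addr0. Qed.
Lemma bil_swap (U V W : lmodType k) (f : U -> V -> W) :
  bilinear_map (fun v u => f u v) -> bilinear_map f.
Proof. by case=> h1 h2; split=> *; [apply: h2 | apply: h1]. Qed.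

Lemma sum_lin (V W : zmodType) (g : V -> W) (T : Type) (s : seq T) (F : T -> V) :
  (forall x y, g (x + y) = g x + g y) -> g 0 = 0 ->
  g (\sum_(p <- s) F p) = \sum_(p <- s) g (F p).
Proof.
move=> ha h0; elim: s => [|p s IH]; first by rewrite !big_nil.
by rewrite !big_cons ha IH.
Qed.

Variables (V : lmodType k) (P : V -> Prop).
Lemma span_add x y : in_span P x -> in_span P y -> in_span P (x + y).
Proof.
move=> Hx Hy; elim: Hx => [|c x' v Px _ IH]; first by rewrite add0r.
by rewrite -addrA; apply: spanS.
Qed.
Lemma span_scale d x : in_span P x -> in_span P (d *: x).
Proof.
elim=> [|c x' v Px _ IH]; first by rewrite scaler0; apply: span0.
by rewrite scalerDr scalerA; apply: spanS.
Qed.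
Lemma span_gen x : P x -> in_span P x.
Proof. by move=> Px; rewrite -[x]addr0 -[x]scale1r; apply: spanS => //; apply: span0. Qed.
Lemma span_sum (T : Type) (s : seq T) (F : T -> V) :
  (forall p, in_span P (F p)) -> in_span P (\sum_(p <- s) F p).
Proof.
move=> H; elim: s => [|p s IH]; first by rewrite big_nil; apply: span0.
by rewrite big_cons; apply: span_add.
Qed.
End Helpers.

Theorem proposition3p9 (k : fieldType) (A : algType k) (M : lmodType k)
  (la : A -> M -> M) (ra : M -> A -> M)
  (dbr : A -> A -> tens2 A A) (dbrM : A -> M -> dsum A M) :
  is_bimodule la ra ->
  double_poisson_algebra dbr ->
  double_poisson_bimodule la ra dbr dbrM ->
  (* well defined on A_natural x M *)
  (forall (a a' : A) (m : M), commAA (a - a') ->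
     brM la ra dbrM a m = brM la ra dbrM a' m) /\
  (* well defined on A_natural x M_natural, with values in M_natural *)
  (forall (a a' : A) (m m' : M), commAA (a - a') -> commAM la ra (m - m') ->
     commAM la ra (brM la ra dbrM a m - brM la ra dbrM a' m')).
Proof.
case=> Hla Hra' [_ _] [assl assr] comm _ [ax1 ax2 [axi1 axi2] axii _].
have Hra : bilinear_map ra by apply: bil_swap.
pose mu (x : dsum A M) := \sum_(p <- x.1) la p.1 p.2 + \sum_(p <- x.2) ra p.1 p.2.
have brME a m : brM la ra dbrM a m = mu (dbrM a m) by [].
have mu_eq x y : dsum_eq x y -> mu x = mu y.
  by case=> e1 e2; rewrite /mu (e1 _ la Hla) (e2 _ ra Hra).
have mu_add x y : mu (dsadd x y) = mu x + mu y.
  by rewrite /mu /dsadd /= !big_cat /= addrACA.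
have mu_scale c x : mu (dsscale c x) = c *: mu x.
  rewrite /mu /dsscale /tscale /= !big_map scalerDr !scaler_sumr.
  by congr (_ + _); apply: eq_bigr => p _; apply: bil_scalel.
have mu_in a x : mu (dsinL la a x) = mu (dsinR ra x a).
  rewrite /mu /= !big_map; congr (_ + _); apply: eq_bigr => p _.
    by rewrite assl.
  by rewrite assr.
have laA b : forall x y, la b (x + y) = la b x + la b y by exact: (bil_addr Hla).
have raA b : forall x y, ra (x + y) b = ra x b + ra y b by move=> x y; exact: (bil_addl Hra).
have mu_outL b x : mu (dsoutL la b x) = la b (mu x).
  rewrite /mu /= !big_map laA !(@sum_lin _ _ (la b) _ _ _ (laA b) (bil0r Hla b)).
  congr (_ + _); apply: eq_bigr => p _; first by rewrite assl.
  by rewrite comm.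
have mu_outR x b : mu (dsoutR ra x b) = ra (mu x) b.
  rewrite /mu /= !big_map raA.
  rewrite !(@sum_lin _ _ (ra^~ b) _ _ _ (fun x y => raA b x y) (bil0l Hra b)).
  congr (_ + _); apply: eq_bigr => p _; first by rewrite comm.
  by rewrite assr.
have lin1 c a a' m : brM la ra dbrM (c *: a + a') m =
    c *: brM la ra dbrM a m + brM la ra dbrM a' m.
  by rewrite !brME (mu_eq _ _ (ax1 c a a' m)) mu_add mu_scale.
have lin2 c a m m' : brM la ra dbrM a (c *: m + m') =
    c *: brM la ra dbrM a m + brM la ra dbrM a m'.
  by rewrite !brME (mu_eq _ _ (ax2 c a m m')) mu_add mu_scale.
have sub1 a a' m : brM la ra dbrM (a - a') m = brM la ra dbrM a m - brM la ra dbrM a' m.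
  by have := lin1 (-1) a' a m; rewrite !scaleN1r addrC [_ + brM _ _ _ _ _]addrC.
have sub2 a m m' : brM la ra dbrM a (m - m') = brM la ra dbrM a m - brM la ra dbrM a m'.
  by have := lin2 (-1) a m' m; rewrite !scaleN1r addrC [_ + brM _ _ _ _ _]addrC.
have vanish m x : commAA x -> brM la ra dbrM x m = 0.
  elim=> [|c x' v [b [b' ->]] _ IH].
    by have := sub1 0 0 m; rewrite subr0 subrr.
  rewrite lin1 IH addr0 sub1.
  rewrite !brME (mu_eq _ _ (axii b b' m)) (mu_eq _ _ (axii b' b m)) !mu_add.
  by rewrite !mu_in [X in _ - X]addrC subrr scaler0.
have part1 : forall (a a' : A) (m : M), commAA (a - a') ->
     brM la ra dbrM a m = brM la ra dbrM a' m.
  by move=> a a' m H; apply/eqP; rewrite -subr_eq0 -sub1 (vanish m).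
split=> // a a' m m' Ha Hm.
rewrite (part1 a a' m Ha) -sub2.
elim: Hm => [|c x v [b [n ->]] _ IH].
  by have := sub2 a' 0 0; rewrite subr0 subrr => ->; apply: span0.
rewrite lin2; apply: span_add => //; apply: span_scale.
rewrite sub2 !brME (mu_eq _ _ (axi1 a' b n)) (mu_eq _ _ (axi2 a' b n)) !mu_add.
rewrite mu_outL mu_outR.
rewrite /mu /= !big_nil !addr0 !add0r !big_map.
set X := mu (dbrM a' n).
have -> : forall s t u w : M, (s + u) - (t + w) = (s - w) + (u - t).
  by move=> s t u w; rewrite opprD [- t - w]addrC addrACA.
apply: span_add; last by apply: span_gen; exists b, X.
rewrite -sumrB; apply: span_sum => p; apply: span_gen; exists (p.1 * p.2), n.
by rewrite assl assr.
Qed.
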